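(* For every $n \geq 3$, the set $\mathcal{T}^{(3)}_n \subseteq \mathcal{T}_n$ (defined in the context) satisfies $|\mathcal{T}^{(3)}_n| = F_{2n-5}$ and \[\chi(\mathrm{KG}(\mathcal{T}^{(3)}_n)) = n-2,\] where $F_k$ is the $k$th Fibonacci number with $F_1 = F_2 = 1$.
   Context: Label the vertices of a convex $n$-gon by $1,\dots,n$ in cyclic order; $\mathrm{Diag}_n = \{\{i,j\} \subseteq [n]: i-j\not\equiv \pm1 \pmod n\}$; a triangulation is identified with its set of diagonals, and $\mathcal{T}_n$ is the set of triangulations. For a set system $\mathcal{F}$, $\mathrm{KG}(\mathcal{F})$ is the graph on $\mathcal{F}$ with $F,F'$ adjacent iff $F\cap F'=\emptyset$. A parenthesization of an ordered list of symbols $\sigma_1,\dots,\sigma_m$ is a way to insert parentheses into $\sigma_1\sigma_2\cdots\sigma_m$ so that it is read as $m-1$ applications of a binary product. $k$-parenthesizations are defined recursively: a $0$-parenthesization is a single symbol. For odd $k\geq 1$, a $k$-parenthesization is one of the form $\pi_1(\pi_2(\cdots(\pi_{\ell-1}(\pi_\ell\sigma))\cdots))$ with $\ell \geq 0$, $\sigma$ a single symbol and $\pi_1,\dots,\pi_\ell$ $(k-1)$-parenthesizations (of consecutive blocks of symbols). For even $k \geq 2$, a $k$-parenthesization is one of the form $(\cdots((\sigma\pi_1)\pi_2)\cdots\pi_{\ell-1})\pi_\ell$ with $\ell\ge 0$, $\sigma$ a single symbol and $\pi_i$ $(k-1)$-parenthesizations. Triangulations $T\in\mathcal{T}_n$ are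 in bijection with parenthesizations of $\sigma_1,\dots,\sigma_{n-1}$: $T$ corresponds to the unique parenthesization in which, for every triangle $\{i,j,k\}$ of $T$ with $i<j<k$ (triangles may use sides of the polygon), the product $\sigma_i\cdots\sigma_{k-1}$ is formed by multiplying $\sigma_i\cdots\sigma_{j-1}$ and $\sigma_j\cdots\sigma_{k-1}$. $\mathcal{T}^{(k)}_n$ is the set of triangulations corresponding to $k$-parenthesizations under this bijection. *)

(* Defs.v *)
From mathcomp Require Import all_boot.
From mathcomp Require Import boolp.

Set Implicit Arguments.
Unset Strict Implicit.
Unset Printing Implicit Defensive.

(* Polygon, diagonals.  Vertices of the convex n-gon are labelled       *)
(* 1..n; we use the type 'I_n.+1 and only the labels 1..n (label 0 is    *)

Definition Diag (n : nat) : {set {set 'I_n.+1}} :=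
  [set D : {set 'I_n.+1} | [exists i : 'I_n.+1, exists j : 'I_n.+1,
     [&& D == [set i; j], 0 < nat_of_ord i, 0 < nat_of_ord j,
         nat_of_ord i != nat_of_ord j,
         (nat_of_ord i).+1 != nat_of_ord j %[mod n] &
         (nat_of_ord j).+1 != nat_of_ord i %[mod n]]]].

(* Parenthesizations = full binary trees; leaves are the symbols        *)
(* sigma_1, ..., sigma_m read from left to right; Node l r = product.   *)
Inductive ptree : Type := Leaf | Node of ptree & ptree.

Fixpoint nleaves (t : ptree) : nat :=
  match t with Leaf => 1 | Node l r => nleaves l + nleaves r end.

(* right comb  pi_1 (pi_2 ( ... (pi_l sigma) ...))  with all pi_i in P *)
Fixpoint rcomb (P : ptree -> bool) (t : ptree) : bool :=
  match t with Leaf => true | Node l r => P l && rcomb P r end.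

(* left comb  ( ... ((sigma pi_1) pi_2) ... ) pi_l  with all pi_i in P *)
Fixpoint lcomb (P : ptree -> bool) (t : ptree) : bool :=
  match t with Leaf => true | Node l r => lcomb P l && P r end.

Fixpoint kpar (k : nat) (t : ptree) : bool :=
  match k with
  | 0 => if t is Leaf then true else false
  | k'.+1 => if odd k then rcomb (kpar k') t else lcomb (kpar k') t
  end.

(* the intervals (i, k) such that the product sigma_i ... sigma_(k-1)    *)
(* is formed in the parenthesization t whose first symbol is sigma_a     *)
Fixpoint spans (t : ptree) (a : nat) : seq (nat * nat) :=
  match t with
  | Leaf => [:: (a, a.+1)]
  | Node l r => (a, a + nleaves l + nleaves r)
                  :: spans l a ++ spans r (a + nleaves l)
  end.

(* The triangulation (as a set of diagonals) corresponding to a          *)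
(* parenthesization t of sigma_1 ... sigma_(n-1): every product          *)
(* (sigma_i..sigma_(j-1))(sigma_j..sigma_(k-1)) gives the triangle       *)
(* {i,j,k}; its diagonals are exactly the pairs {i,k} of formed products *)
(* which are diagonals of the n-gon.                                      *)
Definition triang_of (n : nat) (t : ptree) : {set {set 'I_n.+1}} :=
  [set D in Diag n |
     has (fun p : nat * nat => D == [set inord p.1; inord p.2]) (spans t 1)].

Definition Tk (k n : nat) : {set {set {set 'I_n.+1}}} :=
  [set T | `[< exists t : ptree,
                 [/\ kpar k t, nleaves t = n.-1 & T = triang_of n t] >]].

(* adjacency of KG(F): F, F' adjacent iff F ∩ F' = ∅ (F ≠ F' imposed   *)
(* by the colouring condition below, KG being a simple graph).          *)
Definition KG_adj (D : finType) : rel {set D} :=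
  fun F F' => [disjoint F & F'].

Definition colorable (T : finType) (V : {set T}) (adj : rel T) (k : nat) : bool :=
  [exists c : {ffun T -> 'I_k},
     [forall x in V, forall y in V, ((x != y) && adj x y) ==> (c x != c y)]].

Lemma colorable_exists (T : finType) (V : {set T}) (adj : rel T) :
  exists k, colorable V adj k.
Proof.
exists #|T|; apply/existsP; exists [ffun x => enum_rank x].
apply/forallP => x; apply/implyP => _; apply/forallP => y; apply/implyP => _.
apply/implyP => /andP [nxy _]; rewrite !ffunE.
by apply: contra nxy => /eqP /enum_rank_inj ->.
Qed.

Definition chromatic_number (T : finType) (V : {set T}) (adj : rel T) : nat :=
  ex_minn (colorable_exists V adj).

Fixpoint fib (k : nat) : nat :=
  match k with
  | 0 => 0
  | 1 => 1
  | (k'.+1 as k1).+1 => fib k1 + fib k'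
  end.

(* Main.v *)
From HB Require Import structures.
Require Import Defs.
From mathcomp Require Import all_boot.
From mathcomp Require Import boolp.
From mathcomp Require Import zify.

Set Implicit Arguments.
Unset Strict Implicit.
Unset Printing Implicit Defensive.


Lemma disjP (T : finType) (A B : {set T}) :
  reflect (forall x, x \in A -> x \in B -> False) [disjoint A & B].
Proof.
rewrite -setI_eq0; apply: (iffP eqP) => [H x xA xB | H].
  have : x \in A :&: B by rewrite inE xA.
  by rewrite H inE.
apply/setP => x; rewrite !inE; apply/negbTE/negP => /andP [xA xB].
exact: H xA xB.
Qed.

Lemma nleaves_gt0 t : 0 < nleaves t.
Proof. elim: t => //= l IHl r IHr; lia. Qed.

Lemma spans_bound t a p : p \in spans t a ->
  [/\ a <= p.1, p.1 < p.2 & p.2 <= a + nleaves t].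
Proof.
case: p => x y /=.
elim: t a => [|l IHl r IHr] a /=.
  by rewrite inE => /eqP [-> ->]; split => //; lia.
rewrite inE mem_cat => /orP [/eqP [-> ->]|/orP [/IHl|/IHr]].
- have ? := nleaves_gt0 l; have ? := nleaves_gt0 r; split; lia.
- case=> ? ? ?; have ? := nleaves_gt0 r; split; lia.
- case=> ? ? ?; have ? := nleaves_gt0 l; split; lia.
Qed.

Definition dp n t (p : nat * nat) : bool :=
  [&& p \in spans t 1, p.1.+1 < p.2 & p != (1, n)].

Lemma mod_ok n a b : 1 <= a -> a.+1 < b -> b <= n -> (b = n -> a <> 1) ->
  (a.+1 != b %[mod n]) && (b.+1 != a %[mod n]).
Proof.
move=> h1 h2 h3 h4.
have n1 : 1 < n by lia.
rewrite (modn_small (m := a.+1)) ?(modn_small (m := a)); try lia.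
have [bn|bn] := eqVneq b n.
  rewrite bn modnn -(add1n n) modnDr modn_small //.
  have := h4 bn; lia.
rewrite (modn_small (m := b)); last lia.
have [bn1|bn1] := eqVneq b.+1 n.
  by rewrite bn1 modnn; apply/andP; split; apply/eqP; lia.
rewrite modn_small; last lia.
apply/andP; split; apply/eqP; lia.
Qed.

Lemma inDiag n a b : 1 <= a -> a.+1 < b -> b <= n -> (b = n -> a <> 1) ->
  [set (inord a : 'I_n.+1); inord b] \in Diag n.
Proof.
move=> h1 h2 h3 h4; rewrite inE; apply/existsP; exists (inord a).
apply/existsP; exists (inord b).
rewrite !inordK; try lia.
rewrite eqxx /= (mod_ok h1 h2 h3 h4) andbT.
apply/and3P; split; apply/eqP; lia.
Qed.

Lemma inordv n a : a <= n -> val (inord a : 'I_n.+1) = a.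
Proof. by move=> h; rewrite /= inordK. Qed.

Lemma set2_vals n a b (i : 'I_n.+1) : a <= n -> b <= n ->
  i \in [set (inord a : 'I_n.+1); inord b] -> nat_of_ord i = a \/ nat_of_ord i = b.
Proof.
move=> ha hb /set2P [->|->]; rewrite /= inordK; lia.
Qed.

Lemma Diag_inv n a b : 1 <= a -> a < b -> b <= n ->
  [set (inord a : 'I_n.+1); inord b] \in Diag n ->
  a.+1 < b /\ (b = n -> a <> 1).
Proof.
move=> h1 h2 h3; have an : a <= n by lia.
rewrite inE => /existsP [i /existsP [j]].
case/and5P => /eqP E i0 j0 ij /andP [m1 m2].
have hi : i \in [set (inord a : 'I_n.+1); inord b] by rewrite E set21.
have hj : j \in [set (inord a : 'I_n.+1); inord b] by rewrite E set22.
have := @set2_vals n a b i an h3 hi.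
have := @set2_vals n a b j an h3 hj.
have {}ij : nat_of_ord i != nat_of_ord j by apply: contra ij => /eqP h; apply/eqP.
move: ij m1 m2.
move: (nat_of_ord i) (nat_of_ord j) => x y ij m1 m2 hy hx.
have n1 : 1 < n by clear -h1 h2 h3; lia.
split.
  case: (ltngtP a.+1 b) => // e; first by clear -h2 e; lia.
  exfalso; subst b.
  move: ij m1 m2; case: hx => ->; case: hy => ->; rewrite ?eqxx ?andbF //=.
move=> bn a1; subst.
move: ij m1 m2; case: hx => ->; case: hy => ->;
  rewrite ?eqxx //= -?(add1n n) ?modnDr ?eqxx //.
Qed.

Lemma pair_inj n a b c d : 1 <= a -> a < b -> b <= n -> 1 <= c -> c < d -> d <= n ->
  [set (inord a : 'I_n.+1); inord b] = [set inord c; inord d] -> a = c /\ b = d.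
Proof.
move=> ? ? ? ? ? ? E.
have := @set2_vals n c d (inord a); rewrite -E set21 inordK; last lia.
have := @set2_vals n c d (inord b); rewrite -E set22 inordK; last lia.
move=> h1 h2; have {}h1 := h1 ltac:(lia) ltac:(lia) isT.
have {}h2 := h2 ltac:(lia) ltac:(lia) isT.
lia.
Qed.


Lemma tri_memP n t D : 1 <= n -> nleaves t = n.-1 ->
  reflect (exists2 p, dp n t p & D = [set inord p.1; inord p.2]) (D \in triang_of n t).
Proof.
move=> n1 nt; rewrite inE; apply: (iffP andP).
  case=> Dd /hasP [[a b] ps /eqP E] /=.
  have [h1 h2 h3] := spans_bound ps; rewrite /= in h1 h2 h3.
  subst D; have [] := @Diag_inv n a b h1 h2 ltac:(lia) Dd => c1 c2.
  exists (a, b) => //; rewrite /dp ps /= c1 /= xpair_eqE.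
  by apply/negP => /andP [/eqP a1 /eqP bn]; exact: c2 bn a1.
case=> [[a b]] /and3P [ps c1 c2] -> /=; split.
  have [h1 h2 h3] := spans_bound ps; rewrite /= in h1 h2 h3 c1.
  apply: inDiag => //; first lia.
  by move=> bn a1; subst; rewrite eqxx in c2.
by apply/hasP; exists (a, b).
Qed.

Lemma tri_memI n t p : 1 <= n -> nleaves t = n.-1 -> dp n t p ->
  [set inord p.1; inord p.2] \in triang_of n t.
Proof. by move=> n1 nt h; apply/tri_memP => //; exists p. Qed.

Lemma dp_bound n t p : nleaves t = n.-1 -> 1 <= n -> dp n t p ->
  1 <= p.1 /\ p.1 < p.2 /\ p.2 <= n.
Proof.
case: p => x y; move=> nt n1 /and3P [ps _ _]; have [h1 h2 h3] := spans_bound ps; rewrite /= in h1 h2 h3 *.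
rewrite nt in h3; split => //; split => //; lia.
Qed.

Lemma tri_disjI n t t' : 1 <= n -> nleaves t = n.-1 -> nleaves t' = n.-1 ->
  (forall p, dp n t p -> dp n t' p -> False) ->
  [disjoint triang_of n t & triang_of n t'].
Proof.
move=> n1 nt nt' H; apply/disjP => D /tri_memP [] // [a b] hp -> /tri_memP [] // [c d] hq E.
have [x1 [x2 x3]] := dp_bound nt n1 hp; have [y1 [y2 y3]] := dp_bound nt' n1 hq.
rewrite /= in E x1 x2 x3 y1 y2 y3.
have [e1 e2] := @pair_inj n a b c d ltac:(lia) ltac:(lia) ltac:(lia) ltac:(lia) ltac:(lia) ltac:(lia) E.
subst; exact: H hp hq.
Qed.

Lemma tri_disjE n t t' p : 1 <= n -> nleaves t = n.-1 -> nleaves t' = n.-1 ->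
  [disjoint triang_of n t & triang_of n t'] -> dp n t p -> dp n t' p -> False.
Proof.
move=> n1 nt nt' /disjP H h h'.
exact: H (tri_memI n1 nt h) (tri_memI n1 nt' h').
Qed.

Lemma disj_neq (T : finType) (A B : {set T}) x : [disjoint A & B] -> x \in A -> A != B.
Proof. by move=> /disjP H xA; apply/eqP => E; apply: (H x xA); rewrite -E. Qed.

Lemma spans_bd t a x y : (x, y) \in spans t a -> [/\ a <= x, x < y & y <= a + nleaves t].
Proof. exact: spans_bound. Qed.

Fixpoint fT t := match t with
  | Leaf => Leaf
  | Node l Leaf => Node (Node l Leaf) Leaf
  | Node l r => Node l (fT r) end.
Fixpoint wT t := match t with
  | Leaf => Node Leaf Leaf
  | Node l r => Node l (wT r) end.
Fixpoint lst t a := match t with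
  | Leaf => a
  | Node l Leaf => a
  | Node l r => lst r (a + nleaves l) end.
Fixpoint comb1 k := match k with
  | 0 => Leaf | 1 => Leaf
  | k'.+1 => Node Leaf (comb1 k') end.

Lemma nl_wT t : nleaves (wT t) = (nleaves t).+1.
Proof. by elim: t => //= l _ r ->; rewrite addnS. Qed.

Lemma nl_fT t : t <> Leaf -> nleaves (fT t) = (nleaves t).+1.
Proof.
elim: t => // l _ r IHr _; case: r IHr => [|rl rr] IHr /=; first by rewrite addn1.
by rewrite IHr // addnS.
Qed.

Lemma nl_comb1 k : 0 < k -> nleaves (comb1 k) = k.
Proof. by elim: k => // [[|k]] IH _ //=; rewrite IH. Qed.

Lemma wT_sp t a x y : (x, y) \in spans (wT t) a ->
  [\/ ((x, y) \in spans t a) /\ y < a + nleaves t,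
      y = (a + nleaves t).+1 /\ (x, a + nleaves t) \in spans t a | y <= x.+1].
Proof.
elim: t a => [|l IHl r IHr] a /=.
  rewrite !inE !xpair_eqE => /or3P [] /andP [/eqP -> /eqP ->].
  - by apply: Or32; rewrite !addn1 !eqxx.
  - by apply: Or33.
  - by apply: Or33; lia.
rewrite nl_wT inE mem_cat => /orP [|/orP [] h].
- rewrite xpair_eqE => /andP [/eqP -> /eqP ->]; apply: Or32; split; first lia.
  by rewrite inE addnA eqxx.
- have [h1 h2 h3] := spans_bd h; apply: Or31; split; last by have := nleaves_gt0 r; lia.
  by rewrite inE mem_cat h orbT.
- case: (IHr _ h) => [[h1 h2]|[h1 h2]|]; last by move=> ?; apply: Or33.
    by apply: Or31; rewrite inE mem_cat h1 !orbT; split => //; lia.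
  by apply: Or32; rewrite inE mem_cat addnA h2 !orbT; split => //; lia.
Qed.

Lemma wT_top t a : ((a + nleaves t).-1, (a + nleaves t).+1) \in spans (wT t) a.
Proof.
elim: t a => [|l IHl r IHr] a /=; first by rewrite addn1 inE addn1 eqxx.
rewrite inE mem_cat; apply/orP; right; apply/orP; right.
by have := IHr (a + nleaves l); rewrite addnA.
Qed.

Lemma spansN l r a p : p \in spans (Node l r) a <->
  p = (a, a + nleaves l + nleaves r) \/ p \in spans l a \/ p \in spans r (a + nleaves l).
Proof.
rewrite /= inE mem_cat; split.
  by case/orP => [/eqP ->|/orP [h|h]]; [left|right;left|right;right].
by case=> [->|[h|h]]; rewrite ?eqxx ?h ?orbT.
Qed.

Lemma spansL a p : p \in spans Leaf a <-> p = (a, a.+1).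
Proof. by rewrite /= inE; split => [/eqP|->]. Qed.

Lemma fT_sp t a x y : t <> Leaf -> (x, y) \in spans (fT t) a ->
  [\/ ((x, y) \in spans t a) /\ y < a + nleaves t,
      [/\ y = (a + nleaves t).+1, (x, a + nleaves t) \in spans t a & x.+1 < a + nleaves t],
      x = lst t a /\ y = a + nleaves t | y <= x.+1].
Proof.
elim: t a => // l IHl r IHr a _ H.
have bl := nleaves_gt0 l.
case: r IHr H => [|rl rr] IHr H.
  change (nleaves (Node l Leaf)) with (nleaves l + 1).
  change (fT (Node l Leaf)) with (Node (Node l Leaf) Leaf) in H.
  move/spansN: H => [[-> ->]|[/spansN [[-> ->]|[h|/spansL [-> ->]]]|/spansL [-> ->]]].
  - apply: Or42; split; try (rewrite /=; lia).
    by apply/spansN; left; congr pair; rewrite /=; lia.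
  - by apply: Or43; split => //=; lia.
  - have [h1 h2 h3] := spans_bd h; apply: Or41; split; last lia.
    by apply/spansN; right; left.
  - by apply: Or44; rewrite /=; lia.
  - by apply: Or44; rewrite /=; lia.
have E : fT (Node l (Node rl rr)) = Node l (fT (Node rl rr)) by [].
have El : lst (Node l (Node rl rr)) a = lst (Node rl rr) (a + nleaves l) by [].
have br : 2 <= nleaves (Node rl rr) by rewrite /=; have := nleaves_gt0 rl; have := nleaves_gt0 rr; lia.
rewrite E in H; rewrite El.
move: (Node rl rr) IHr H br => r IHr H br.
have rL : r <> Leaf by move=> e; rewrite e in br.
change (nleaves (Node l r)) with (nleaves l + nleaves r).
have nr := nl_fT rL.
move/spansN: H => [[-> ->]|[h|h]].
- apply: Or42; split; try lia.
  by apply/spansN; left; congr pair; lia.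
- have [h1 h2 h3] := spans_bd h; apply: Or41; split; last lia.
  by apply/spansN; right; left.
- case: (IHr _ rL h) => [[h1 h2]|[h1 h2 h3]|[h1 h2]|]; last by move=> ?; apply: Or44.
  + by apply: Or41; split; [apply/spansN; right; right|lia].
  + apply: Or42; split; try lia.
    by apply/spansN; right; right; rewrite addnA.
  + by apply: Or43; split => //; lia.
Qed.


Lemma root_sp t a : (a, a + nleaves t) \in spans t a.
Proof. by case: t => [|l r] /=; rewrite inE ?addn1 ?addnA eqxx. Qed.

Lemma lst_sp t a : t <> Leaf ->
  [/\ (lst t a, a + nleaves t) \in spans t a,
      (lst t a, (a + nleaves t).-1) \in spans t a &
      (lst t a).+1 < a + nleaves t].
Proof.
elim: t a => // l IHl r IHr a _.
have bl := nleaves_gt0 l.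
case: r IHr => [|rl rr] IHr.
  change (lst (Node l Leaf) a) with a.
  change (nleaves (Node l Leaf)) with (nleaves l + 1).
  split; last lia.
    by apply/spansN; left; rewrite addnA.
  by apply/spansN; right; left; rewrite addnA addn1 /= root_sp.
have El : lst (Node l (Node rl rr)) a = lst (Node rl rr) (a + nleaves l) by [].
rewrite El; change (nleaves (Node l (Node rl rr))) with (nleaves l + nleaves (Node rl rr)).
have [h1 h2 h3] := IHr (a + nleaves l) ltac:(by []).
split.
- by apply/spansN; right; right; rewrite addnA.
- by apply/spansN; right; right; rewrite addnA.
- lia.
Qed.

Lemma lst_fT t a : t <> Leaf -> (lst t a, a + nleaves t) \in spans (fT t) a.
Proof.
elim: t a => // l IHl r IHr a _.
case: r IHr => [|rl rr] IHr.
  change (fT (Node l Leaf)) with (Node (Node l Leaf) Leaf).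
  change (lst (Node l Leaf) a) with a.
  by apply/spansN; right; left; apply: root_sp.
have E : fT (Node l (Node rl rr)) = Node l (fT (Node rl rr)) by [].
have El : lst (Node l (Node rl rr)) a = lst (Node rl rr) (a + nleaves l) by [].
rewrite E El; apply/spansN; right; right.
change (nleaves (Node l (Node rl rr))) with (nleaves l + nleaves (Node rl rr)).
by rewrite addnA; apply: IHr.
Qed.

Definition Zt m := Node (comb1 m.-1) Leaf.

Lemma comb1_sp k a x y : 0 < k -> (x, y) \in spans (comb1 k) a -> y = a + k \/ y = x.+1.
Proof.
elim: k a => // [[|k]] IH a _ H.
  by change (comb1 1) with Leaf in H; move/spansL: H => [-> ->]; right.
change (comb1 k.+2) with (Node Leaf (comb1 k.+1)) in H.
move/spansN: H => [[-> ->]|[/spansL [-> ->]|h]].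
- left; rewrite (nl_comb1 (k:=k.+1)) //; lia.
- by right.
- change (nleaves Leaf) with 1 in h; case: (IH _ isT h) => ->; [left; lia|by right].
Qed.

Lemma Zt_sp m x y : 2 <= m -> (x, y) \in spans (Zt m) 1 ->
  [\/ (x, y) = (1, m.+1), y = m | y = x.+1].
Proof.
move=> m2 /spansN [->|[h|/spansL [-> ->]]].
- by apply: Or31; rewrite /= nl_comb1; [congr pair; lia|lia].
- case: (comb1_sp _ h) => [|->|->]; [lia|apply: Or32; lia|by apply: Or33].
- by apply: Or33.
Qed.

Lemma nl_Zt m : 2 <= m -> nleaves (Zt m) = m.
Proof. by move=> m2; rewrite /= nl_comb1; lia. Qed.

Lemma kpar3E t : kpar 3 t = rcomb (kpar 2) t. Proof. by []. Qed.
Lemma kpar2E t : kpar 2 t = lcomb (kpar 1) t. Proof. by []. Qed.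
Lemma kpar1E t : kpar 1 t = rcomb (kpar 0) t. Proof. by []. Qed.

Lemma kpar_wT t : kpar 3 t -> kpar 3 (wT t).
Proof. by rewrite !kpar3E; elim: t => //= l _ r IHr /andP [-> /IHr]. Qed.

Lemma kpar_fT t : kpar 3 t -> kpar 3 (fT t).
Proof.
rewrite !kpar3E; elim: t => // l _ r IHr.
case: r IHr => [|rl rr] IHr.
  by rewrite /= andbT => ->.
have E : fT (Node l (Node rl rr)) = Node l (fT (Node rl rr)) by [].
by rewrite E /= => /andP [-> /IHr].
Qed.

Lemma kpar1_comb1 k : kpar 1 (comb1 k).
Proof. by rewrite kpar1E; elim: k => // [[|k]] IH //=. Qed.

Lemma kpar2_comb1 k : kpar 2 (comb1 k).
Proof.
case: k => [|[|k]] //.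
change (comb1 k.+2) with (Node Leaf (comb1 k.+1)).
rewrite kpar2E; apply/andP; split => //; exact: kpar1_comb1.
Qed.

Lemma kpar_Zt m : kpar 3 (Zt m).
Proof.
rewrite kpar3E; apply/andP; split => //; exact: kpar2_comb1.
Qed.

Section DP.
Variable m : nat.

Lemma dpP n t x y : dp n t (x, y) ->
  [/\ (x, y) \in spans t 1, x.+1 < y & (y = n -> x <> 1)].
Proof.
case/and3P => h1 h2 h3; split => // yn x1; subst.
by rewrite eqxx in h3.
Qed.

Lemma dpI n t x y : (x, y) \in spans t 1 -> x.+1 < y -> (y = n -> x <> 1) -> dp n t (x, y).
Proof.
move=> h1 h2 h3; rewrite /dp h1 h2 /= xpair_eqE; apply/negP => /andP [/eqP a /eqP b].
exact: h3 b a.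
Qed.

Lemma notLeaf t : 2 <= nleaves t -> t <> Leaf.
Proof. by move=> h e; rewrite e in h. Qed.

Lemma ff_dp tx ty x y : 4 <= m -> nleaves tx = m.-1 -> nleaves ty = m.-1 ->
  (forall q, dp m tx q -> dp m ty q -> False) ->
  dp m.+1 (fT tx) (x, y) -> dp m.+1 (fT ty) (x, y) -> False.
Proof.
move=> m4 nx ny H /dpP [hx c1 c2] /dpP [hy _ _].
have txL : tx <> Leaf by apply: notLeaf; lia.
have tyL : ty <> Leaf by apply: notLeaf; lia.
have Mx : 1 + nleaves tx = m by lia.
have My : 1 + nleaves ty = m by lia.
have [lx1 lx2 lx3] := lst_sp 1 txL; have [ly1 ly2 ly3] := lst_sp 1 tyL.
rewrite Mx in lx1 lx2 lx3; rewrite My in ly1 ly2 ly3.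
have ox := fT_sp txL hx; have oy := fT_sp tyL hy; rewrite Mx in ox; rewrite My in oy.
case: ox => [[hx1 hx2]|[hx1 hx2 hx3]|[hx1 hx2]|hx1];
  case: oy => [[hy1 hy2]|[hy1 hy2 hy3]|[hy1 hy2]|hy1]; try lia.
- apply: (H (x, y)); apply: dpI => //; lia.
- apply: (H (x, m)); apply: dpI => //; lia.
- subst x y; rewrite -hy1 in ly1 ly2 ly3.
  have [e|e] := eqVneq (lst tx 1) 1.
    rewrite e in lx2 ly2; apply: (H (1, m.-1)); apply: dpI => //; lia.
  apply: (H (lst tx 1, m)); apply: dpI => //; move=> _; exact/eqP.
Qed.

Lemma wf_dp tx ty x y : 3 <= m -> nleaves tx = m.-1 -> nleaves ty = m.-1 ->
  (forall q, dp m tx q -> dp m ty q -> False) ->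
  dp m.+1 (wT tx) (x, y) -> dp m.+1 (fT ty) (x, y) -> False.
Proof.
move=> m3 nx ny H /dpP [hx c1 c2] /dpP [hy _ _].
have tyL : ty <> Leaf by apply: notLeaf; lia.
have Mx : 1 + nleaves tx = m by lia.
have My : 1 + nleaves ty = m by lia.
have ox := wT_sp hx; have oy := fT_sp tyL hy; rewrite Mx in ox; rewrite My in oy.
case: ox => [[hx1 hx2]|[hx1 hx2]|hx1];
  case: oy => [[hy1 hy2]|[hy1 hy2 hy3]|[hy1 hy2]|hy1]; try lia.
- apply: (H (x, y)); apply: dpI => //; lia.
- apply: (H (x, m)); apply: dpI => //; lia.
Qed.

Lemma wz_dp t x y : 3 <= m -> nleaves t = m.-1 ->
  dp m.+1 (wT t) (x, y) -> dp m.+1 (Zt m) (x, y) -> False.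
Proof.
move=> m3 nt /dpP [hx c1 c2] /dpP [hz _ _].
have Mx : 1 + nleaves t = m by lia.
case: (@Zt_sp m x y ltac:(lia) hz) => [[e1 e2]|e|e]; try lia.
subst y; have ox := wT_sp hx; rewrite Mx in ox; case: ox => [[]|[]|]; lia.
Qed.

Lemma fT_ne t : 3 <= m -> nleaves t = m.-1 -> dp m.+1 (fT t) (lst t 1, m).
Proof.
move=> m3 nt; have tL : t <> Leaf by apply: notLeaf; lia.
have [_ _ h] := lst_sp 1 tL; have := lst_fT 1 tL.
have -> : 1 + nleaves t = m by lia.
move=> hs; apply: dpI => //; rewrite nt in h; lia.
Qed.

Lemma wT_ne t : 3 <= m -> nleaves t = m.-1 -> dp m.+1 (wT t) (m.-1, m.+1).
Proof.
move=> m3 nt; have := wT_top t 1.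
have -> : 1 + nleaves t = m by lia.
move=> hs; apply: dpI => //; lia.
Qed.

Lemma Zt_ne : 3 <= m -> dp m.+1 (Zt m) (1, m).
Proof.
move=> m3; apply: dpI; try lia.
apply/spansN; right; left.
have := root_sp (comb1 m.-1) 1; rewrite nl_comb1; last lia.
by have -> : 1 + m.-1 = m by lia.
Qed.

End DP.


Lemma colP (T : finType) (V : {set T}) (adj : rel T) k :
  reflect (exists c : T -> 'I_k, forall u v, u \in V -> v \in V -> u != v -> adj u v -> c u != c v)
    (colorable V adj k).
Proof.
apply: (iffP existsP) => [[c /forallP cP]|[c cP]].
  exists c => u v uV vV uv a; move: (cP u); rewrite uV => /forallP /(_ v).
  by rewrite vV uv a.
exists [ffun x => c x]; apply/forallP => u; apply/implyP => uV; apply/forallP => v.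
apply/implyP => vV; apply/implyP => /andP [uv a]; rewrite !ffunE; exact: cP.
Qed.

Lemma myc (T1 T2 : finType) (V1 : {set T1}) (V2 : {set T2}) (a1 : rel T1) (a2 : rel T2)
  k (f w : T1 -> T2) (z : T2) (x0 : T1) :
  x0 \in V1 -> z \in V2 ->
  (forall x, x \in V1 -> f x \in V2) -> (forall x, x \in V1 -> w x \in V2) ->
  (forall x, x \in V1 -> (w x != z) && a2 (w x) z) ->
  (forall x y, x \in V1 -> y \in V1 -> x != y -> a1 x y -> (f x != f y) && a2 (f x) (f y)) ->
  (forall x y, x \in V1 -> y \in V1 -> x != y -> a1 x y -> (w x != f y) && a2 (w x) (f y)) ->
  (forall x y, a1 x y -> a1 y x) ->
  colorable V2 a2 k.+1 -> colorable V1 a1 k.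
Proof.
move=> x0V zV fV wV wz ff wf sym /colP [c cp].
pose g x := if c (f x) == c z then c (w x) else c (f x).
have gz : forall x, x \in V1 -> g x != c z.
  move=> x xV; rewrite /g; case: ifP => [_|/negbT //].
  by case/andP: (wz x xV) => h1 h2; apply: cp => //; apply: wV.
have gp : forall x y, x \in V1 -> y \in V1 -> x != y -> a1 x y -> g x != g y.
  move=> x y xV yV xy a; rewrite /g.
  case: (eqVneq (c (f x)) (c z)) => ex; case: (eqVneq (c (f y)) (c z)) => ey.
  - case/andP: (ff x y xV yV xy a) => h1 h2.
    by have := cp _ _ (fV _ xV) (fV _ yV) h1 h2; rewrite ex ey eqxx.
  - by case/andP: (wf x y xV yV xy a) => h1 h2; apply: cp => //; [apply: wV|apply: fV].
  - have a' := sym _ _ a; have yx : y != x by rewrite eq_sym.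
    case/andP: (wf y x yV xV yx a') => h1 h2; rewrite eq_sym.
    by apply: cp => //; [apply: wV|apply: fV].
  - by case/andP: (ff x y xV yV xy a) => h1 h2; apply: cp => //; apply: fV.
case: k c cp g gz gp => [|k] c cp g gz gp.
  by have := gz x0 x0V; rewrite (ord1 (g x0)) (ord1 (c z)) eqxx.
apply/colP; exists (fun x => odflt ord0 (unlift (c z) (g x))).
move=> u v uV vV uv a.
have gu : c z != g u by rewrite eq_sym gz.
have gv : c z != g v by rewrite eq_sym gz.
have [ju eu ->] := unlift_some gu.
have [jv ev ->] := unlift_some gv.
rewrite /=; apply: contra (gp u v uV vV uv a) => /eqP e.
by rewrite eu ev e.
Qed.


Definition tof m (x : {set {set 'I_m.+1}}) : ptree :=
  match pselect (exists t, [/\ kpar 3 t, nleaves t = m.-1 & x = triang_of m t]) with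
  | left H => proj1_sig (cid H)
  | right _ => Leaf
  end.

Lemma tofP m x : x \in Tk 3 m ->
  [/\ kpar 3 (tof x), nleaves (tof x) = m.-1 & x = triang_of m (tof x)].
Proof.
rewrite inE => /asboolP H; rewrite /tof; case: pselect => [H'|//].
exact: (proj2_sig (cid H')).
Qed.

Lemma TkI m t : kpar 3 t -> nleaves t = m.-1 -> triang_of m t \in Tk 3 m.
Proof. by move=> h1 h2; rewrite inE; apply/asboolP; exists t. Qed.

Lemma two_leaves t : nleaves t = 2 -> t = Node Leaf Leaf.
Proof.
case: t => // l r /= h.
have hl : nleaves l = 1 by have := nleaves_gt0 l; have := nleaves_gt0 r; lia.
have hr : nleaves r = 1 by have := nleaves_gt0 l; have := nleaves_gt0 r; lia.
case: l hl {h} => [|l1 l2] /= hl; last by have := nleaves_gt0 l1; have := nleaves_gt0 l2; lia.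
case: r hr => [|r1 r2] /= hr //; have := nleaves_gt0 r1; have := nleaves_gt0 r2; lia.
Qed.

Lemma step m k : 3 <= m ->
  colorable (Tk 3 m.+1) (@KG_adj _) k.+1 -> colorable (Tk 3 m) (@KG_adj _) k.
Proof.
move=> m3.
have m1 : 1 <= m by lia.
have m1' : 1 <= m.+1 by [].
apply: (@myc _ _ _ _ _ _ k (fun x => triang_of m.+1 (fT (tof x)))
   (fun x => triang_of m.+1 (wT (tof x))) (triang_of m.+1 (Zt m))
   (triang_of m (Zt m.-1))).
- by apply: TkI; [exact: kpar_Zt|rewrite nl_Zt //; lia].
- by apply: TkI; [exact: kpar_Zt|rewrite nl_Zt //; lia].
- move=> x /tofP [h1 h2 h3]; apply: TkI; first exact: kpar_fT.
  by rewrite nl_fT ?h2 /=; [lia|apply: notLeaf; lia].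
- move=> x /tofP [h1 h2 h3]; apply: TkI; first exact: kpar_wT.
  by rewrite nl_wT h2 /=; lia.
- move=> x /tofP [h1 h2 h3].
  have nw : nleaves (wT (tof x)) = m.+1.-1 by rewrite nl_wT h2 /=; lia.
  have nz : nleaves (Zt m) = m.+1.-1 by rewrite nl_Zt //; lia.
  have D : [disjoint triang_of m.+1 (wT (tof x)) & triang_of m.+1 (Zt m)].
    apply: tri_disjI => // [[a b]]; exact: wz_dp m3 h2.
  rewrite /KG_adj D andbT; apply: disj_neq D _.
  exact: tri_memI m1' nw (wT_ne m3 h2).
- move=> x y /tofP [hx1 hx2 hx3] /tofP [hy1 hy2 hy3] xy.
  rewrite /KG_adj => dxy.
  have [e3|m4] : m = 3 \/ 4 <= m by lia.
    subst m; rewrite hx3 hy3 (two_leaves hx2) (two_leaves hy2) eqxx in xy; done.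
  have Hq : forall q, dp m (tof x) q -> dp m (tof y) q -> False.
    move=> q; apply: tri_disjE => //; by rewrite -hx3 -hy3.
  have nfx : nleaves (fT (tof x)) = m.+1.-1 by rewrite nl_fT ?hx2 /=; [lia|apply: notLeaf; lia].
  have nfy : nleaves (fT (tof y)) = m.+1.-1 by rewrite nl_fT ?hy2 /=; [lia|apply: notLeaf; lia].
  have D : [disjoint triang_of m.+1 (fT (tof x)) & triang_of m.+1 (fT (tof y))].
    apply: tri_disjI => // [[a b]]; exact: ff_dp m4 hx2 hy2 Hq.
  rewrite D andbT; apply: disj_neq D _.
  exact: tri_memI m1' nfx (fT_ne m3 hx2).
- move=> x y /tofP [hx1 hx2 hx3] /tofP [hy1 hy2 hy3] xy.
  rewrite /KG_adj => dxy.
  have Hq : forall q, dp m (tof x) q -> dp m (tof y) q -> False.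
    move=> q; apply: tri_disjE => //; by rewrite -hx3 -hy3.
  have nw : nleaves (wT (tof x)) = m.+1.-1 by rewrite nl_wT hx2 /=; lia.
  have nfy : nleaves (fT (tof y)) = m.+1.-1 by rewrite nl_fT ?hy2 /=; [lia|apply: notLeaf; lia].
  have D : [disjoint triang_of m.+1 (wT (tof x)) & triang_of m.+1 (fT (tof y))].
    apply: tri_disjI => // [[a b]]; exact: wf_dp m3 hx2 hy2 Hq.
  rewrite D andbT; apply: disj_neq D _.
  exact: tri_memI m1' nw (wT_ne m3 hx2).
- by move=> x y; rewrite /KG_adj disjoint_sym.
Qed.

Lemma lower n : 3 <= n -> ~~ colorable (Tk 3 n) (@KG_adj _) (n - 3).
Proof.
elim: n => // n IH n3.
have [e|n4] : n = 2 \/ 3 <= n by lia.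
  subst n; apply/negP => /existsP [c _].
  by have := c set0; case.
apply/negP; have -> : n.+1 - 3 = (n - 3).+1 by lia.
by move/(step n4); apply/negP; apply: IH.
Qed.


Fixpoint ptree_eqb (t u : ptree) : bool :=
  match t, u with
  | Leaf, Leaf => true
  | Node l r, Node l' r' => ptree_eqb l l' && ptree_eqb r r'
  | _, _ => false
  end.

Lemma ptree_eqP : Equality.axiom ptree_eqb.
Proof.
elim=> [|l IHl r IHr] [|l' r'] /=; try by constructor.
by apply: (iffP andP) => [[/IHl -> /IHr ->]|[<- <-]]; split; [apply/IHl|apply/IHr].
Qed.

HB.instance Definition _ := hasDecEq.Build ptree ptree_eqP.

Lemma uniq_flat (A B : eqType) (F : A -> seq B) s :
  uniq s -> (forall x, x \in s -> uniq (F x)) ->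
  (forall x y b, x \in s -> y \in s -> b \in F x -> b \in F y -> x = y) ->
  uniq (flatten (map F s)).
Proof.
elim: s => //= x s IH /andP [xs us] uF dj.
rewrite cat_uniq uF ?inE ?eqxx // IH //; last first.
- by move=> ? ? ? ? ?; apply: dj; rewrite inE; apply/orP; right.
- by move=> ? ?; apply: uF; rewrite inE; apply/orP; right.
rewrite andbT; apply/hasP => [[b /flatten_mapP [y ys bFy] bFx]].
have e := dj x y b ltac:(by rewrite inE eqxx) ltac:(by rewrite inE ys orbT) bFx bFy.
by rewrite e ys in xs.
Qed.

Section Enum.
Variable P : ptree -> bool.
Variable E : nat -> seq ptree.
Hypothesis HE : forall s t, (t \in E s) = P t && (nleaves t == s).
Hypothesis UE : forall s, uniq (E s).

Fixpoint rcE (f m : nat) : seq ptree :=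
  match f with
  | 0 => [::]
  | f'.+1 => (if m == 1 then [:: Leaf] else [::]) ++
      flatten [seq [seq Node l r | l <- E s, r <- rcE f' (m - s)] | s <- iota 1 m.-1]
  end.

Fixpoint lcE (f m : nat) : seq ptree :=
  match f with
  | 0 => [::]
  | f'.+1 => (if m == 1 then [:: Leaf] else [::]) ++
      flatten [seq [seq Node l r | l <- lcE f' (m - s), r <- E s] | s <- iota 1 m.-1]
  end.

Lemma rcE_mem f m t : m <= f -> (t \in rcE f m) = rcomb P t && (nleaves t == m).
Proof.
elim: f m t => [|f IH] m t mf /=.
  have m0 : m = 0 by lia.
  subst m; rewrite in_nil (_ : (nleaves t == 0) = false) ?andbF //.
  by apply/negbTE; rewrite -lt0n; exact: nleaves_gt0.
rewrite mem_cat; apply/idP/idP.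
  case/orP.
    by case: eqP => // -> ; rewrite inE => /eqP ->.
  case/flatten_mapP => s; rewrite mem_iota => /andP [s1 s2] /allpairsP [[l r] [/= lE rR ->]].
  rewrite HE in lE; case/andP: lE => Pl /eqP nl.
  rewrite IH in rR; last lia.
  case/andP: rR => rr /eqP nr; rewrite /= Pl rr /=; apply/eqP; lia.
case: t => [|l r] /=.
  by move=> /eqP <-; rewrite eqxx inE eqxx.
case/andP => /andP [Pl rr] /eqP nlr; apply/orP; right.
have := nleaves_gt0 l; have := nleaves_gt0 r => hr hl.
apply/flatten_mapP; exists (nleaves l); first by rewrite mem_iota; lia.
apply/allpairsP; exists (l, r) => /=; split => //.
  by rewrite HE Pl eqxx.
rewrite IH; last lia.
by rewrite rr /=; apply/eqP; lia.
Qed.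

Lemma lcE_mem f m t : m <= f -> (t \in lcE f m) = lcomb P t && (nleaves t == m).
Proof.
elim: f m t => [|f IH] m t mf /=.
  have m0 : m = 0 by lia.
  subst m; rewrite in_nil (_ : (nleaves t == 0) = false) ?andbF //.
  by apply/negbTE; rewrite -lt0n; exact: nleaves_gt0.
rewrite mem_cat; apply/idP/idP.
  case/orP.
    by case: eqP => // -> ; rewrite inE => /eqP ->.
  case/flatten_mapP => s; rewrite mem_iota => /andP [s1 s2] /allpairsP [[l r] [/= lL rE ->]].
  rewrite HE in rE; case/andP: rE => Pr /eqP nr.
  rewrite IH in lL; last lia.
  case/andP: lL => ll /eqP nl; rewrite /= Pr ll /=; apply/eqP; lia.
case: t => [|l r] /=.
  by move=> /eqP <-; rewrite eqxx inE eqxx.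
case/andP => /andP [ll Pr] /eqP nlr; apply/orP; right.
have := nleaves_gt0 l; have := nleaves_gt0 r => hr hl.
apply/flatten_mapP; exists (nleaves r); first by rewrite mem_iota; lia.
apply/allpairsP; exists (l, r) => /=; split => //.
  rewrite IH; last lia.
  by rewrite ll /=; apply/eqP; lia.
by rewrite HE Pr eqxx.
Qed.

Lemma rcE_uniq f m : uniq (rcE f m).
Proof.
elim: f m => [|f IH] m //=.
rewrite cat_uniq; apply/and3P; split.
- by case: eqP.
- apply/hasP => [[t /flatten_mapP [s _ /allpairsP [[l r] [_ _ ->]]]]].
  by case: eqP => //; rewrite inE.
apply: uniq_flat; first exact: iota_uniq.
  move=> s _; apply: allpairs_uniq => //.
  by move=> [l r] [l' r'] _ _ /= [-> ->].
move=> s s' b _ _ /allpairsP [[l r] [/= lE _ ->]] /allpairsP [[l' r'] [/= lE' _ [el _]]].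
rewrite HE in lE; rewrite HE in lE'; subst l'.
by case/andP: lE => _ /eqP <-; case/andP: lE' => _ /eqP <-.
Qed.

Lemma lcE_uniq f m : uniq (lcE f m).
Proof.
elim: f m => [|f IH] m //=.
rewrite cat_uniq; apply/and3P; split.
- by case: eqP.
- apply/hasP => [[t /flatten_mapP [s _ /allpairsP [[l r] [_ _ ->]]]]].
  by case: eqP => //; rewrite inE.
apply: uniq_flat; first exact: iota_uniq.
  move=> s _; apply: allpairs_uniq => //.
  by move=> [l r] [l' r'] _ _ /= [-> ->].
move=> s s' b _ _ /allpairsP [[l r] [/= _ rE ->]] /allpairsP [[l' r'] [/= _ rE' [_ er]]].
rewrite HE in rE; rewrite HE in rE'; subst r'.
by case/andP: rE => _ /eqP <-; case/andP: rE' => _ /eqP <-.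
Qed.

Lemma rcE_size f m : size (rcE f.+1 m) =
  (m == 1) + \sum_(1 <= s < m) size (E s) * size (rcE f (m - s)).
Proof.
rewrite /= size_cat; congr addn; first by case: eqP.
rewrite size_flatten /shape -map_comp sumnE big_map /index_iota subn1.
by apply: eq_bigr => s _ /=; rewrite size_allpairs.
Qed.

Lemma lcE_size f m : size (lcE f.+1 m) =
  (m == 1) + \sum_(1 <= s < m) size (lcE f (m - s)) * size (E s).
Proof.
rewrite /= size_cat; congr addn; first by case: eqP.
rewrite size_flatten /shape -map_comp sumnE big_map /index_iota subn1.
by apply: eq_bigr => s _ /=; rewrite size_allpairs.
Qed.

Lemma rcE_fuel f g m : m <= f -> m <= g -> rcE f m = rcE g m.
Proof.
elim: f g m => [|f IH] g m mf mg.
  have -> : m = 0 by lia.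
  by case: g mg => //= g _.
case: g mg => [|g] mg; first by have -> : m = 0 by lia.
rewrite /=; congr cat; congr flatten; apply/eq_in_map => s; rewrite mem_iota => hs.
by rewrite (IH g) //; lia.
Qed.

Lemma lcE_fuel f g m : m <= f -> m <= g -> lcE f m = lcE g m.
Proof.
elim: f g m => [|f IH] g m mf mg.
  have -> : m = 0 by lia.
  by case: g mg => //= g _.
case: g mg => [|g] mg; first by have -> : m = 0 by lia.
rewrite /=; congr cat; congr flatten; apply/eq_in_map => s; rewrite mem_iota => hs.
by rewrite (IH g) //; lia.
Qed.

End Enum.


Definition E0 (s : nat) : seq ptree := if s == 1 then [:: Leaf] else [::].
Definition E1 m := rcE E0 m m.
Definition E2 m := lcE E1 m m.
Definition E3 m := rcE E2 m m.

Lemma HE0 s t : (t \in E0 s) = kpar 0 t && (nleaves t == s).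
Proof.
rewrite /E0; case: t => [|l r] /=; first by rewrite eq_sym; case: eqP; rewrite ?inE.
by case: eqP.
Qed.
Lemma UE0 s : uniq (E0 s). Proof. by rewrite /E0; case: eqP. Qed.

Lemma HE1 s t : (t \in E1 s) = kpar 1 t && (nleaves t == s).
Proof. by rewrite /E1 (rcE_mem HE0). Qed.
Lemma UE1 s : uniq (E1 s). Proof. exact: rcE_uniq HE0 UE0 _ _. Qed.
Lemma HE2 s t : (t \in E2 s) = kpar 2 t && (nleaves t == s).
Proof. by rewrite /E2 (lcE_mem HE1). Qed.
Lemma UE2 s : uniq (E2 s). Proof. exact: lcE_uniq HE1 UE1 _ _. Qed.
Lemma HE3 s t : (t \in E3 s) = kpar 3 t && (nleaves t == s).
Proof. by rewrite /E3 (rcE_mem HE2). Qed.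
Lemma UE3 s : uniq (E3 s). Proof. exact: rcE_uniq HE2 UE2 _ _. Qed.

Lemma szE1 m : 0 < m -> size (E1 m) = 1.
Proof.
elim: m {-2}m (leqnn m) => [|N IH] m mN m0; first lia.
case: m mN m0 => // m mN _.
rewrite /E1 rcE_size.
case: m mN => [|m] mN; first by rewrite big_geq.
rewrite big_ltn // big1_seq; last first.
  by move=> i /=; rewrite mem_index_iota => /andP [i2 _]; rewrite /E0; case: eqP => //; lia.
have -> : size (E0 1) = 1 by [].
have -> : rcE E0 m.+1 (m.+2 - 1) = E1 m.+1 by rewrite subn1.
by rewrite IH //; lia.
Qed.

Lemma szE2 m : size (E2 m) = (m == 1) + \sum_(1 <= s < m) size (E2 (m - s)).
Proof.
case: m => [|m]; first by rewrite big_geq.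
rewrite /E2 lcE_size; congr addn; apply: eq_big_nat => s /andP [s1 s2].
rewrite szE1 // muln1; congr size; apply: lcE_fuel; lia.
Qed.

Lemma szE3 m : size (E3 m) = (m == 1) + \sum_(1 <= s < m) size (E2 s) * size (E3 (m - s)).
Proof.
case: m => [|m]; first by rewrite big_geq.
rewrite /E3 rcE_size; congr addn; apply: eq_big_nat => s /andP [s1 s2].
congr (_ * size _); apply: rcE_fuel; lia.
Qed.

Definition a m := size (E2 m).
Definition b m := size (E3 m).

Lemma a1 : a 1 = 1. Proof. by rewrite /a szE2 big_geq. Qed.
Lemma a2 : a 2 = 1. Proof. by rewrite /a szE2 big_nat1 -/(a 1) a1. Qed.

Lemma a_rec m : 2 <= m -> a m.+1 = 2 * a m.
Proof.
move=> m2; rewrite /a szE2 (szE2 m) big_nat_recl; last lia.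
have -> : (m.+1 == 1) = false by apply/eqP; lia.
have -> : (m == 1) = false by apply/eqP; lia.
under eq_big_nat => i _ do rewrite subSS.
rewrite subn1 /=; have h := szE2 m; have e : (m == 1) = false by apply/eqP; lia.
rewrite e in h; lia.
Qed.

Lemma b1 : b 1 = 1. Proof. by rewrite /b szE3 big_geq. Qed.
Lemma b2 : b 2 = 1.
Proof. by rewrite /b szE3 big_nat1 -/(a 1) a1 mul1n. Qed.

Lemma b_rec m : 2 <= m -> b m.+1 + b m.-1 = 3 * b m.
Proof.
move=> m2; rewrite /b szE3 (szE3 m) big_nat_recl; last lia.
have -> : (m.+1 == 1) = false by apply/eqP; lia.
have -> : (m == 1) = false by apply/eqP; lia.
rewrite !add0n (big_ltn (m := 1)) // (big_ltn (m := 1)) //.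
rewrite -/(a 1) -/(a 2) a1 a2 !mul1n subSS subn0.
rewrite (eq_big_nat _ _ (F2 := fun i => 2 * (a i * b (m - i)))); last first.
  by move=> i /andP [i2 _]; rewrite subSS -/(a i.+1) a_rec // -mulnA.
rewrite -big_distrr /=.
rewrite -/(b m) -/(b (m - 1)).
set S := \sum_(2 <= i < m) a i * b (m - i).
have e : (\sum_(2 <= i < m) size (E2 i) * size (E3 (m - i))) = S by [].
have h : b m = b (m - 1) + S.
  rewrite /b szE3 (_ : (m == 1) = false); last by apply/eqP; lia.
  by rewrite big_ltn // -/(a 1) a1 mul1n.
have h' : size (E3 m.-1) = b (m - 1) by rewrite subn1.
lia.
Qed.

Lemma fibS k : fib k.+2 = fib k.+1 + fib k. Proof. by []. Qed.

Lemma b_fib m : 2 <= m -> b m = fib (2 * m - 3).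
Proof.
move=> m2.
suff H : forall k, b k.+2 = fib (2 * k.+2 - 3) /\ b k.+3 = fib (2 * k.+3 - 3).
  by case: m m2 => [|[|m]] // _; case: (H m).
elim=> [|k [IH1 IH2]].
  have := b_rec (m := 2) isT; rewrite b1 b2 /= => h; split => //; lia.
split => //.
have := b_rec (m := k.+3) isT; rewrite [_.-1]/= IH1 IH2.
have -> : 2 * k.+4 - 3 = (2 * k.+2 - 3).+4 by lia.
have -> : 2 * k.+3 - 3 = (2 * k.+2 - 3).+2 by lia.
move: (2 * k.+2 - 3) => j.
rewrite !fibS; lia.
Qed.


Lemma leaf_sp t a i : a <= i < a + nleaves t -> (i, i.+1) \in spans t a.
Proof.
elim: t a => [|l IHl r IHr] a /= hi.
  by apply/spansL; congr pair; lia.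
have [h|h] : i < a + nleaves l \/ a + nleaves l <= i by lia.
  by apply/spansN; right; left; apply: IHl; lia.
by apply/spansN; right; right; apply: IHr; lia.
Qed.

Lemma inl_of l r a x y : (x, y) \in spans (Node l r) a -> y <= a + nleaves l ->
  (x, y) \in spans l a.
Proof.
have := nleaves_gt0 r => hr.
move/spansN => [[_ ->]|[//|h]]; first lia.
have [h1 h2 h3] := spans_bd h; lia.
Qed.

Lemma inr_of l r a x y : (x, y) \in spans (Node l r) a -> a + nleaves l <= x ->
  (x, y) \in spans r (a + nleaves l).
Proof.
have := nleaves_gt0 l => hl.
move/spansN => [[-> _]|[h|//]]; first lia.
have [h1 h2 h3] := spans_bd h; lia.
Qed.

Lemma spans_inj t t' a : nleaves t = nleaves t' ->
  (forall x y, (x, y) \in spans t a -> (x, y) \in spans t' a) ->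
  (forall x y, (x, y) \in spans t' a -> (x, y) \in spans t a) -> t = t'.
Proof.
elim: t t' a => [|l IHl r IHr] [|l' r'] a // hn H H'; rewrite /= in hn.
- by have := nleaves_gt0 l'; have := nleaves_gt0 r'; lia.
- by have := nleaves_gt0 l; have := nleaves_gt0 r; lia.
have := nleaves_gt0 l; have := nleaves_gt0 r; have := nleaves_gt0 l'; have := nleaves_gt0 r'.
move=> g1 g2 g3 g4.
have le1 : nleaves l <= nleaves l'.
  have := H _ _ (proj2 (spansN _ _ _ _) (or_intror (or_introl (root_sp l a)))).
  move/spansN => [[e]|[h|h]]; first lia.
    by have [_ _ ?] := spans_bd h; lia.
  by have [? _ _] := spans_bd h; lia.
have le2 : nleaves l' <= nleaves l.
  have := H' _ _ (proj2 (spansN _ _ _ _) (or_intror (or_introl (root_sp l' a)))).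
  move/spansN => [[e]|[h|h]]; first lia.
    by have [_ _ ?] := spans_bd h; lia.
  by have [? _ _] := spans_bd h; lia.
have eL : nleaves l = nleaves l' by lia.
have eR : nleaves r = nleaves r' by lia.
congr Node.
- apply: (IHl l' a eL) => x y h.
    have [_ _ h3] := spans_bd h; apply: inl_of; last by rewrite -eL.
    by apply: H; apply/spansN; right; left.
  have [_ _ h3] := spans_bd h; apply: inl_of; last by rewrite eL.
  by apply: H'; apply/spansN; right; left.
- apply: (IHr r' (a + nleaves l) eR) => x y h.
    have [h1 _ _] := spans_bd h; rewrite eL; apply: inr_of; last by rewrite -eL.
    by apply: H; apply/spansN; right; right.
  have [h1 _ _] := spans_bd h; apply: inr_of; last by [].
  by apply: H'; apply/spansN; right; right; rewrite -eL.
Qed.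

Lemma tri_sub n t t' x y : 1 <= n -> nleaves t = n.-1 -> nleaves t' = n.-1 ->
  triang_of n t = triang_of n t' -> (x, y) \in spans t 1 -> (x, y) \in spans t' 1.
Proof.
move=> n1 nt nt' E h; have [h1 h2 h3] := spans_bd h; rewrite nt in h3.
have [e|ne] := eqVneq y x.+1.
  by subst y; apply: leaf_sp; lia.
have [e|ne'] := eqVneq (x, y) (1, n).
  by case: e => -> ->; have := root_sp t' 1; rewrite nt'; have -> : 1 + n.-1 = n by lia.
have d : dp n t (x, y).
  apply: dpI => //; first by move/eqP: ne; lia.
  by move=> yn x1; subst; rewrite eqxx in ne'.
have := tri_memI n1 nt d; rewrite E => /tri_memP [] // [c d'] hq /= E'.
have [q1 [q2 q3]] := dp_bound nt' n1 hq; rewrite /= in E' q1 q2 q3.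
have [e1 e2] := @pair_inj n x y c d' ltac:(lia) ltac:(lia) ltac:(lia) ltac:(lia) ltac:(lia) ltac:(lia) E'.
by subst; case/and3P: hq.
Qed.

Lemma tri_inj n t t' : 1 <= n -> nleaves t = n.-1 -> nleaves t' = n.-1 ->
  triang_of n t = triang_of n t' -> t = t'.
Proof.
move=> n1 nt nt' E; apply: (spans_inj (a := 1)); first by rewrite nt nt'.
  by move=> x y; exact: (tri_sub n1 nt nt' E).
by move=> x y; exact: (tri_sub n1 nt' nt (esym E)).
Qed.

Lemma card_Tk n : 1 <= n -> #|Tk 3 n| = b n.-1.
Proof.
move=> n1.
have -> : #|Tk 3 n| = #|[seq triang_of n t | t <- E3 n.-1]|.
  apply: eq_card => x; apply/idP/idP.
    by move/tofP => [h1 h2 ->]; apply: map_f; rewrite HE3 h1 h2 eqxx.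
  by move/mapP => [t]; rewrite HE3 => /andP [h1 /eqP h2] ->; apply: TkI.
rewrite (card_uniqP _) ?size_map //.
rewrite map_inj_in_uniq ?UE3 // => t t'; rewrite !HE3 => /andP [_ /eqP h] /andP [_ /eqP h'].
exact: tri_inj.
Qed.

Definition col m t := match t with
  | Node l Leaf => m
  | Node l _ => (nleaves l).-1
  | Leaf => 0 end.

Lemma col_le m t : nleaves t = m.+2 -> col m t <= m.
Proof.
case: t => // l [|rl rr] //= h.
have := nleaves_gt0 rl; have := nleaves_gt0 rr; lia.
Qed.

Lemma one_leaf t : nleaves t = 1 -> t = Leaf.
Proof. by case: t => // l r /=; have := nleaves_gt0 l; have := nleaves_gt0 r; lia. Qed.

Lemma col_share m tx ty : nleaves tx = m.+2 -> nleaves ty = m.+2 -> col m tx = col m ty ->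
  tx = ty \/ exists p, dp m.+3 tx p /\ dp m.+3 ty p.
Proof.
case: tx => // lx rx; case: ty => // ly ry.
have := nleaves_gt0 lx; have := nleaves_gt0 ly => g1 g2.
case: rx => [|rxl rxr]; case: ry => [|ryl ryr] /= hx hy hc.
- have [e|m1] : m = 0 \/ 1 <= m by lia.
    subst m; left.
    have e1 : lx = Leaf by apply: one_leaf; lia.
    have e2 : ly = Leaf by apply: one_leaf; lia.
    by rewrite e1 e2.
  right; exists (1, m.+2); split; apply: dpI; try lia.
  + by apply/spansN; right; left; have := root_sp lx 1; have -> : 1 + nleaves lx = m.+2 by lia.
  + by apply/spansN; right; left; have := root_sp ly 1; have -> : 1 + nleaves ly = m.+2 by lia.
- by have := nleaves_gt0 ryl; have := nleaves_gt0 ryr; lia.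
- by have := nleaves_gt0 rxl; have := nleaves_gt0 rxr; lia.
- have := nleaves_gt0 rxl; have := nleaves_gt0 rxr; have := nleaves_gt0 ryl; have := nleaves_gt0 ryr.
  move=> h1 h2 h3 h4.
  have el : nleaves lx = nleaves ly by lia.
  right; exists ((nleaves lx).+1, m.+3); split; apply: dpI; try lia.
  + apply/spansN; right; right; have := root_sp (Node rxl rxr) (1 + nleaves lx).
    by rewrite /= add1n; have -> : (nleaves lx).+1 + (nleaves rxl + nleaves rxr) = m.+3 by lia.
  + apply/spansN; right; right; have := root_sp (Node ryl ryr) (1 + nleaves ly).
    by rewrite /= add1n el; have -> : (nleaves ly).+1 + (nleaves ryl + nleaves ryr) = m.+3 by lia.
Qed.


Lemma col_widen (T : finType) (V : {set T}) (adj : rel T) k k' :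
  k <= k' -> colorable V adj k -> colorable V adj k'.
Proof.
move=> kk /colP [c cp]; apply/colP; exists (fun x => widen_ord kk (c x)).
move=> u v uV vV uv a; move: (cp u v uV vV uv a); apply: contra => /eqP e.
by apply/eqP; apply: ord_inj; exact: (congr1 (@nat_of_ord _) e).
Qed.

Lemma upper n : 3 <= n -> colorable (Tk 3 n) (@KG_adj _) (n - 2).
Proof.
case: n => [|[|[|m]]] // _.
rewrite (_ : m.+3 - 2 = m.+1) //.
apply/colP; exists (fun x => inord (col m (tof x))) => u v uV vV uv duv.
have [hu1 hu2 hu3] := tofP uV; have [hv1 hv2 hv3] := tofP vV.
apply/negP => /eqP e.
have ec : col m (tof u) = col m (tof v).
  by have := congr1 (@nat_of_ord _) e; rewrite !inordK // ltnS col_le.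
case: (col_share hu2 hv2 ec) => [et|[p [d1 d2]]].
  by rewrite hu3 hv3 et eqxx in uv.
apply: (tri_disjE (n := m.+3) _ hu2 hv2 _ d1 d2) => //.
by rewrite -hu3 -hv3.
Qed.

Theorem theorem1p2 (n : nat) :
  3 <= n ->
  #|Tk 3 n| = fib (2 * n - 5) /\
  chromatic_number (Tk 3 n) (@KG_adj _) = n - 2.
Proof.
move=> n3; split.
  rewrite card_Tk; last lia.
  rewrite b_fib; last lia.
  congr fib; lia.
rewrite /chromatic_number; case: ex_minnP => k ck kmin.
have kle := kmin _ (upper n3).
apply/eqP; rewrite eqn_leq kle /= leqNgt; apply/negP => lt.
have := lower n3; rewrite (@col_widen _ _ _ k (n - 3) _ ck) //; lia.
Qed.
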